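(* Let $(X_1,X_2)$ be a nonnegative random vector and let $\overline F_T$ be a DFR survival function on $[0,\infty)$. Assume there exists an $N_1$-distributional version $\{Z_2^{x_1}:x_1\in N_1\}$ of $X_2$ given $X_1$ such that $Z_2^{x_1}\le_{ST}X_1$ for all $x_1\in N_1$. Then $$\big(E[\overline F_T(X_1)]\big)^2\le E[\overline F_T(X_1+X_2)]\,\overline F_T(0).$$
   Context: A survival function $\overline G$ is DFR if for every $z\ge0$ the map $t\mapsto\overline G(z+t)/\overline G(t)$ is increasing (on $\{t:\overline G(t)>0\}$). For random variables $X,Y$, $X\le_{ST}Y$ means $P(X>t)\le P(Y>t)$ for all real $t$. Let $F_1$ be the law of $X_1$ and $N_1\subseteq\mathbb R_+$ a Borel set with $P(X_1\in N_1)=1$. A family $\{\mu^{x}:x\in N_1\}$ of probability measures on $\mathbb R_+$ with $x\mapsto\mu^{x}(B)$ measurable for every Borel $B$ is an $N_1$ regular conditional distribution of $X_2$ given $X_1$ if $P(X_1\in A,X_2\in B)=\int_A\mu^{x}(B)\,dF_1(x)$ for all Borel $A\subseteq N_1$, $B\subseteq\mathbb R_+$; an $N_1$-distributional version of $X_2$ given $X_1$ is a family of random variables $\{Z_2^{x}:x\in N_1\}$ with $Z_2^{x}$ having law $\mu^{x}$ for such a regular conditional distribution. *)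

(* Defs.v *)
From HB Require Import structures.
From mathcomp Require Import all_boot all_order all_algebra.
From mathcomp Require Import all_classical all_reals all_analysis measurable_realfun.
Set Implicit Arguments. Unset Strict Implicit. Unset Printing Implicit Defensive.
Import Order.TTheory GRing.Theory Num.Theory.
Local Open Scope classical_set_scope.
Local Open Scope ring_scope.

Definition survival_on_Rplus (R : realType) (G : R -> R) : Prop :=
  exists mu : probability R R,
    mu `[0, +oo[%classic = 1%E /\ forall t : R, (G t)%:E = mu `]t, +oo[%classic.

Definition DFR (R : realType) (G : R -> R) : Prop :=
  forall z t s : R, 0 <= z -> 0 <= t -> t <= s -> 0 < G t -> 0 < G s ->
    G (z + t) / G t <= G (z + s) / G s.

(* mu ~ {mu^x : x in N1} is an N1 regular conditional distribution of X2
   given X1 (the family is indexed by all of R but only used on N1). *)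
Definition regular_cond_distr d (T : measurableType d) (R : realType)
    (P : probability T R) (X1 X2 : {RV P >-> R}) (N1 : set R)
    (mu : R -> probability R R) : Prop :=
  measurable N1 /\ P (X1 @^-1` N1) = 1%E /\
  (forall x, N1 x -> mu x `[0, +oo[%classic = 1%E) /\
  (forall B : set R, measurable B -> measurable_fun N1 (fun x => mu x B)) /\
  (forall A B : set R, measurable A -> A `<=` N1 ->
     measurable B -> B `<=` `[0, +oo[%classic ->
     P (X1 @^-1` A `&` X2 @^-1` B) =
     (\int[distribution P X1]_(x in A) mu x B)%E).

(* Main.v *)
Require Import Defs.
Set Warnings "-notation-overridden,-ambiguous-paths,-deprecated,-notation-incompatible-prefix".
From HB Require Import structures.
From mathcomp Require Import all_boot all_order all_algebra.
From mathcomp Require Import all_classical all_reals all_analysis measurable_realfun.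
Import Order.TTheory GRing.Theory Num.Theory.
Local Open Scope classical_set_scope.
Local Open Scope ring_scope.

Section helpers.
Set Implicit Arguments. Unset Strict Implicit.
Local Open Scope ereal_scope.

Lemma mS d (T : measurableType d) (R : realType) (Y : T -> R) :
  measurable_fun setT Y ->
  measurable [set p : T * R | (Y p.1 < p.2)%R].
Proof.
move=> mY.
have mf : measurable_fun setT (fun p : T * R => (p.2 - Y p.1)%R).
  apply: measurable_funB; first exact: measurable_snd.
  exact: measurableT_comp mY measurable_fst.
have := mf measurableT _ (measurable_itv `]0%R, +oo[).
rewrite setTI.
congr measurable; apply/seteqP; split => p /=; rewrite in_itv/= andbT subr_gt0//.
Qed.

Lemma fubL d (T : measurableType d) (R : realType) (P : probability T R)
  (nu : probability R R) (k : T -> \bar R) (Y : T -> R) :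
  measurable_fun setT k -> (forall w, 0 <= k w) -> measurable_fun setT Y ->
  \int[P]_w (k w * nu `]Y w, +oo[%classic) =
  \int[nu]_u \int[P]_w (k w * (\1_[set p : T * R | (Y p.1 < p.2)%R] (w, u))%:E).
Proof.
move=> mk k0 mY.
set S := [set p : T * R | (Y p.1 < p.2)%R].
have mS' := mS mY.
set f := fun p : T * R => k p.1 * (\1_S p)%:E.
have mf : measurable_fun setT f.
  apply: emeasurable_funM; first exact: measurableT_comp mk measurable_fst.
  by apply/measurable_EFinP; exact: measurable_indic.
have f0 p : 0 <= f p by rewrite /f mule_ge0// lee_fin indicE; case: (_ \in _).
rewrite -(fubini_tonelli f mf f0) /=.
apply: eq_integral => w _.
have mu1 : measurable_fun setT (fun u : R => ((\1_S (w, u) : R))%:E).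
  have h1 : measurable_fun setT (fun u : R => \1_S (w,u) : R).
    have := (measurableT_comp (f := (\1_S : T * R -> R)) (g := pair w) (measurable_indic mS') (pair1_measurable w)).
    exact.
  exact/measurable_EFinP.
rewrite /f /= ge0_integralZl//.
congr (_ * _).
rewrite -(setIT `]Y w, +oo[%classic) -integral_indic//.
apply: eq_integral => u _; rewrite !indicE.
case: (ltrP (Y w) u) => h.
  by rewrite mem_set ?mem_set //= in_itv /= andbT.
by rewrite memNset ?memNset //; rewrite /S /= ?in_itv /= ?andbT ltNge h.
Qed.

Lemma PsetI1 d (T : measurableType d) (R : realType) (P : probability T R)
  (C E : set T) : measurable C -> measurable E -> P E = 1 -> P (C `&` E) = P C.
Proof.
move=> mC mE PE.
rewrite [RHS](measureDI P mC mE).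
rewrite -[LHS]add0e; congr (_ + _); apply/esym.
  apply/eqP; rewrite -measure_le0.
  have : P (C `\` E) <= P (~` E).
    apply: le_measure; rewrite ?inE.
    - exact: measurableD.
    - exact: measurableC.
    - by move=> x [].
  by rewrite probability_setC// PE subee// => /le_trans; apply.
Qed.

Lemma closed_tail d (T : measurableType d) (R : realType) (P : probability T R)
  (X : {RV P >-> R}) (nu : probability R R) (u : R) :
  (forall t : R, nu `]t, +oo[%classic <= P (X @^-1` `]t, +oo[%classic)) ->
  nu `[u, +oo[%classic <= P (X @^-1` `[u, +oo[%classic).
Proof.
move=> h.
pose F n := X @^-1` `](u - (n.+1%:R)^-1)%R, +oo[%classic.
have mF n : measurable (F n) by exact: measurable_funPTI.
have capF : \bigcap_n F n = X @^-1` `[u, +oo[%classic.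
  apply/seteqP; split => w /=.
    move=> Hw; rewrite in_itv /= andbT leNgt; apply/negP => Xu.
    have [k hk] := ltr_add_invr Xu.
    have := Hw k I; rewrite /F /= in_itv /= andbT => hk'.
    by move: hk'; rewrite ltrBlDr => /(lt_trans hk); rewrite ltxx.
  move=> Hw n _; rewrite /F /= in_itv /= andbT.
  move: Hw; rewrite in_itv /= andbT => Hw.
  by rewrite ltrBlDr (le_lt_trans Hw)// ltrDl invr_gt0.
have cvgF : (P \o F) @ \oo --> P (\bigcap_n F n).
  apply: nonincreasing_cvg_mu => //.
  - by rewrite (le_lt_trans (probability_le1 _ _))// ltey.
  - exact: bigcapT_measurable.
  - move=> m n mn; apply/subsetPset; rewrite /F => w /=; rewrite !in_itv /= !andbT.
    apply: le_lt_trans; rewrite lerD2l lerN2 lef_pV2 ?posrE ?ltr0Sn// ler_nat ltnS //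
    Show.
rewrite capF in cvgF; rewrite -(cvg_lim (@ereal_hausdorff R) cvgF).
apply: lime_ge; first by apply/cvg_ex; eexists; exact: cvgF.
apply: nearW => n /=.
apply: le_trans (h _).
apply: le_measure; rewrite ?inE.
- exact: measurable_itv.
- exact: measurable_itv.
move=> x /=; rewrite !in_itv /= !andbT => hx.
by rewrite ltrBlDr (le_lt_trans hx)// ltrDl invr_gt0.
Qed.

Lemma lower_cdf d (T : measurableType d) (R : realType) (P : probability T R)
  (X : {RV P >-> R}) (nu : probability R R) (u : R) :
  nu `[0%R, +oo[%classic = 1 ->
  (forall t : R, nu `]t, +oo[%classic <= P (X @^-1` `]t, +oo[%classic)) ->
  P (X @^-1` `]-oo, u[%classic) <= nu `[0%R, u[%classic.
Proof.
move=> nu1 h.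
have c := closed_tail u h.
have s : 1 <= nu `[0%R, u[%classic + nu `[u, +oo[%classic.
  rewrite -nu1; apply: le_trans (measureU2 _ _ _); last 2 first.
  - exact: measurable_itv.
  - exact: measurable_itv.
  apply: le_measure; rewrite ?inE.
  - exact: measurable_itv.
  - by apply: measurableU; exact: measurable_itv.
  move=> x /=; rewrite !in_itv /= !andbT => hx.
  by case: (ltrP x u) => xu; [left|right]; rewrite ?in_itv/= ?hx ?xu.
have -> : X @^-1` `]-oo, u[%classic = ~` (X @^-1` `[u, +oo[%classic).
  apply/seteqP; split => w /=; rewrite !in_itv /= ?andbT.
    by move=> hw; rewrite leNgt hw.
  by rewrite leNgt => /negP; rewrite negbK.
rewrite probability_setC; last exact: measurable_funPTI.
have qf : P (X @^-1` `[u, +oo[%classic) \is a fin_num.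
  by rewrite ge0_fin_numE// (le_lt_trans (probability_le1 _ _))// ?ltey//; exact: measurable_funPTI.
rewrite leeBlDr//.
apply: le_trans s _.
by rewrite leeD2l.
Qed.

Lemma key_ineq d (T : measurableType d) (R : realType) (P : probability T R)
  (X1 X2 : {RV P >-> R}) (N1 : set R) (mu : R -> probability R R) (s u : R) :
  (forall w, (0 <= X2 w)%R) -> regular_cond_distr X1 X2 N1 mu ->
  (forall x, N1 x -> forall t : R,
       mu x `]t, +oo[%classic <= P (X1 @^-1` `]t, +oo[%classic)) ->
  P (X1 @^-1` `]-oo, s[%classic) * P (X1 @^-1` `]-oo, u[%classic) <=
  P (X1 @^-1` `]-oo, s[%classic `&` X2 @^-1` `]-oo, u[%classic).
Proof.
move=> X20 [mN1 [PN1 [mu1 [mmu hreg]]]] hst.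
set A := N1 `&` `]-oo, s[%classic.
set B := `[0%R, u[%classic.
have mA : measurable A by apply: measurableI => //; exact: measurable_itv.
have mB : measurable B by exact: measurable_itv.
have mX1 (Y : set R) : measurable Y -> measurable (X1 @^-1` Y) by exact: measurable_funPTI.
have mX2 (Y : set R) : measurable Y -> measurable (X2 @^-1` Y) by exact: measurable_funPTI.
have E1 : P (X1 @^-1` `]-oo, s[%classic `&` X2 @^-1` `]-oo, u[%classic) =
          P (X1 @^-1` A `&` X2 @^-1` B).
  rewrite -(PsetI1 (E := X1 @^-1` N1)); last 3 first.
  - by apply: measurableI; [apply: mX1|apply: mX2]; exact: measurable_itv.
  - exact: mX1.
  - exact: PN1.
  congr (P _); apply/seteqP; split => w /=.
    move=> [[hs hu] hN]; split; first by split.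
    by move: hu; rewrite /B /= !in_itv /= X20.
  move=> [[hN hs] hu]; split => //; split => //.
  by move: hu; rewrite /B /= !in_itv /= => /andP[].
rewrite E1 hreg//; last 2 first.
- by move=> x [].
- by move=> x; rewrite /B /= !in_itv /= => /andP[-> _].
have E2 : distribution P X1 A = P (X1 @^-1` `]-oo, s[%classic).
  rewrite /distribution /pushforward /=.
  rewrite -[RHS](PsetI1 (E := X1 @^-1` N1)); last 3 first.
  - by apply: mX1; exact: measurable_itv.
  - exact: mX1.
  - exact: PN1.
  by congr (P _); apply/seteqP; split => w /=; move=> [? ?]; split => //; split.
rewrite muleC -E2 -integral_cst//.
apply: ge0_le_integral => //.
- by apply: measurable_funS (mmu _ mB) => // x [].
- move=> x [Nx _].
  exact: lower_cdf (mu1 _ Nx) (hst _ Nx).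
Qed.

Lemma indic_sec d (T : measurableType d) (R : realType) (Y : T -> R) w u :
  (\1_[set p : T * R | (Y p.1 < p.2)%R] (w, u) : R) = \1_(Y @^-1` `]-oo, u[%classic) w.
Proof.
rewrite !indicE; case: (ltrP (Y w) u) => h.
  by rewrite mem_set ?mem_set //= in_itv /= h.
by rewrite memNset ?memNset //=; rewrite ?in_itv /= ltNge h.
Qed.

Lemma fubLm d (T : measurableType d) (R : realType) (P : probability T R)
  (k : T -> \bar R) (Y : T -> R) :
  measurable_fun setT k -> (forall w, 0 <= k w) -> measurable_fun setT Y ->
  measurable_fun setT
   (fun u => \int[P]_w (k w * (\1_[set p : T * R | (Y p.1 < p.2)%R] (w, u))%:E)).
Proof.
move=> mk k0 mY.
set S := [set p : T * R | (Y p.1 < p.2)%R].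
have mS' := mS mY.
set f := fun p : T * R => k p.1 * (\1_S p)%:E.
have mf : measurable_fun setT f.
  apply: emeasurable_funM; first exact: measurableT_comp mk measurable_fst.
  by apply/measurable_EFinP; exact: measurable_indic.
have f0 p : 0 <= f p by rewrite /f mule_ge0// lee_fin indicE; case: (_ \in _).
exact: (measurable_fun_fubini_tonelli_G (m1 := P) f mf f0).
Qed.

End helpers.
Unset Implicit Arguments.

Theorem proposition3p2 (d : measure_display) (T : measurableType d)
    (R : realType) (P : probability T R) (X1 X2 : {RV P >-> R})
    (G : R -> R) :
  (forall w, 0 <= X1 w) -> (forall w, 0 <= X2 w) ->
  survival_on_Rplus G -> DFR G ->
  (exists (N1 : set R) (mu : R -> probability R R),
     regular_cond_distr X1 X2 N1 mu /\
     forall x, N1 x -> forall t : R,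
       (mu x `]t, +oo[%classic <= P (X1 @^-1` `]t, +oo[%classic))%E) ->
  ((\int[P]_w (G (X1 w))%:E) ^+ 2 <=
     (\int[P]_w (G (X1 w + X2 w))%:E) * (G 0)%:E)%E.
Proof.
move=> X10 X20 [mu0 [mu01 GE]] hDFR [N1 [mu [hreg hst]]].
have G0 t : (0 <= G t)%R by rewrite -lee_fin GE measure_ge0.
have Gni : {homo G : x y / (x <= y)%R >-> (y <= x)%R}.
  move=> x y xy; rewrite -lee_fin !GE; apply: le_measure; rewrite ?inE.
  - exact: measurable_itv.
  - exact: measurable_itv.
  by move=> z /=; rewrite !in_itv /= !andbT; apply: le_lt_trans.
have mG : measurable_fun setT G by apply: nonincreasing_measurable.
have Gprod x y : (0 <= x)%R -> (0 <= y)%R -> (G x * G y <= G (x + y) * G 0)%R.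
  move=> x0 y0.
  have [Gz|Gpos] := eqVneq (G 0) 0%R.
    have : (G x <= 0)%R by rewrite -Gz Gni.
    move=> hx; have -> : G x = 0%R by apply/eqP; rewrite eq_le hx G0.
    by rewrite mul0r mulr_ge0.
  have [Gy|Gypos] := eqVneq (G y) 0%R.
    by rewrite Gy mulr0 mulr_ge0.
  have G0p : (0 < G 0)%R by rewrite lt_def Gpos G0.
  have Gyp : (0 < G y)%R by rewrite lt_def Gypos G0.
  have := hDFR x 0%R y x0 (lexx _) y0 G0p Gyp.
  rewrite addr0 ler_pdivrMr// mulrAC ler_pdivlMr//.
have mGX (Y : T -> R) : measurable_fun setT Y ->
    measurable_fun setT (fun w => (G (Y w))%:E).
  move=> mY; apply/measurable_EFinP; exact: measurableT_comp mG mY.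
have mX (Y : {RV P >-> R}) : measurable_fun setT Y := measurable_funP Y.
have mXp (Y : {RV P >-> R}) (B : set R) : measurable B -> measurable (Y @^-1` B).
  by move=> mB; exact: measurable_funPTI.
pose a := (\int[P]_w (G (X1 w))%:E)%E.
pose Pl := fun u => P (X1 @^-1` `]-oo, u[%classic).
have a0 : (0 <= a)%E by apply: integral_ge0 => w _; rewrite lee_fin.
have Pl0 u : (0 <= Pl u)%E by exact: measure_ge0.
have m1 : measurable_fun setT (fun _ : T => (1%E : \bar R)) by exact: measurable_cst.
have hPl u : (\int[P]_w ((fun _ : T => (1%E : \bar R)) w *
     (\1_[set p : T * R | (X1 p.1 < p.2)%R] (w, u))%:E))%E = Pl u.
  transitivity (\int[P]_w (\1_(X1 @^-1` `]-oo, u[%classic) w)%:E)%E.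
    by apply: eq_integral => w _; rewrite mul1e indic_sec.
  by rewrite integral_indic ?setIT//; apply: mXp; exact: measurable_itv.
have hA : a = (\int[mu0]_u Pl u)%E.
  have h := @fubL _ _ _ P mu0 (fun _ : T => (1%E : \bar R)) X1 m1 (fun=> lee01) (mX X1).
  transitivity (\int[P]_w ((fun _ : T => (1%E : \bar R)) w * mu0 `]X1 w, +oo[%classic))%E.
    by apply: eq_integral => w _; rewrite mul1e GE.
  by rewrite h; apply: eq_integral => u _; rewrite hPl.
have mPl : measurable_fun setT Pl.
  have := @fubLm _ _ _ P (fun _ : T => (1%E : \bar R)) X1 m1 (fun=> lee01) (mX X1).
  by apply: eq_measurable_fun => u _; rewrite hPl.
have mX12 : measurable_fun setT (fun w => X1 w + X2 w)%R.
  exact: measurable_funD (mX X1) (mX X2).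
have h3 : (\int[P]_w ((G (X1 w))%:E * (G (X2 w))%:E) <=
           \int[P]_w (G (X1 w + X2 w))%:E * (G 0)%:E)%E.
  rewrite -ge0_integralZr//.
  all: try (exact: (mGX _ mX12)).
  all: try (by move=> w _; rewrite lee_fin).
  all: try (by rewrite lee_fin).
  have mf1 : measurable_fun setT (fun w => (G (X1 w))%:E * (G (X2 w))%:E)%E.
    exact: (emeasurable_funM (mGX _ (mX X1)) (mGX _ (mX X2))).
  have mf2 : measurable_fun setT (fun w => (G (X1 w + X2 w))%:E * (G 0)%:E)%E.
    exact: (emeasurable_funM (mGX _ mX12) (measurable_cst _)).
  apply: (@ge0_le_integral _ _ _ P setT measurableT _ _ _ mf1 mf2).
  - by move=> w _; rewrite -EFinM lee_fin mulr_ge0.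
  - by move=> w _; rewrite -!EFinM lee_fin Gprod.
apply: le_trans h3.
set S1 := [set p : T * R | (X1 p.1 < p.2)%R].
set S2 := [set p : T * R | (X2 p.1 < p.2)%R].
have mkG : measurable_fun setT (fun w => (G (X1 w))%:E) by exact: mGX.
have kG0 : forall w, (0 <= (G (X1 w))%:E)%E by move=> w; rewrite lee_fin.
have hM := @fubL _ _ _ P mu0 (fun w => (G (X1 w))%:E) X2 mkG kG0 (mX X2).
have mM := @fubLm _ _ _ P (fun w => (G (X1 w))%:E) X2 mkG kG0 (mX X2).
rewrite (_ : (\int[P]_w ((G (X1 w))%:E * (G (X2 w))%:E))%E =
   (\int[P]_w ((G (X1 w))%:E * mu0 `]X2 w, +oo[%classic))%E); last first.
  by apply: eq_integral => w _; rewrite [(G (X2 w))%:E]GE.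
rewrite hM expe2 -/a {2}hA -ge0_integralZl//.
all: try (by move=> ? _; exact: Pl0).
have mf1 : measurable_fun setT (fun u => a * Pl u)%E.
  exact: (emeasurable_funM (measurable_cst a) mPl).
apply: (@ge0_le_integral _ _ _ mu0 setT measurableT _ _ _ mf1 mM).
  by move=> u _; rewrite mule_ge0.
move=> u _.
pose ku := fun w => (\1_(X2 @^-1` `]-oo, u[%classic) w)%:E : \bar R.
have mku : measurable_fun setT ku.
  apply/measurable_EFinP; apply: measurable_indic; apply: mXp; exact: measurable_itv.
have ku0 : forall w, (0 <= ku w)%E by move=> w; rewrite lee_fin indicE; case: (_ \in _).
have hI := @fubL _ _ _ P mu0 ku X1 mku ku0 (mX X1).
have mI := @fubLm _ _ _ P ku X1 mku ku0 (mX X1).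
rewrite (_ : (\int[P]_w ((G (X1 w))%:E * (\1_S2 (w, u))%:E))%E =
   (\int[P]_w (ku w * mu0 `]X1 w, +oo[%classic))%E); last first.
  by apply: eq_integral => w _; rewrite /S2 indic_sec muleC -GE.
rewrite hI muleC hA -ge0_integralZl//.
all: try (by move=> ? _; exact: Pl0).
have mf1' : measurable_fun setT (fun s => Pl u * Pl s)%E.
  exact: (emeasurable_funM (measurable_cst (Pl u)) mPl).
apply: (@ge0_le_integral _ _ _ mu0 setT measurableT _ _ _ mf1' mI).
  by move=> s _; rewrite mule_ge0.
move=> s _.
rewrite (_ : (\int[P]_w (ku w * (\1_S1 (w, s))%:E))%E =
   P (X1 @^-1` `]-oo, s[%classic `&` X2 @^-1` `]-oo, u[%classic)); last first.
  transitivity (\int[P]_w (\1_(X1 @^-1` `]-oo, s[%classic `&`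
                              X2 @^-1` `]-oo, u[%classic) w)%:E)%E.
    apply: eq_integral => w _; rewrite /ku /S1 indic_sec -EFinM indicI /= mulrC //.
  rewrite integral_indic ?setIT//.
  by apply: measurableI; apply: mXp; exact: measurable_itv.
rewrite muleC.
exact: (@key_ineq _ _ _ P X1 X2 N1 mu s u X20 hreg hst).
Qed.
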